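(* Let $C$ be a non-empty clique of $G$. Then the problem $\max\{f(\mathbf{x}):\mathbf{x}\in\Delta(C)\}$ has a unique local maximizer, which is therefore its unique global maximizer, and this maximizer is $\mathbf{x}(C)$.
   Context: Let $G=(\mathcal{V},\mathcal{E})$ be a simple undirected graph on vertex set $\mathcal{V}=\{1,\dots,n\}$ with adjacency matrix $\mathbf{A}=(a_{ij})$ ($a_{ij}=1$ if $(i,j)\in\mathcal{E}$, else $0$; $a_{ii}=0$). A clique is a subset $C\subseteq\mathcal{V}$ with $(i,j)\in\mathcal{E}$ for all distinct $i,j\in C$. Let $\Delta=\{\mathbf{x}\in\mathbb{R}^n:\mathbf{0}\le\mathbf{x}\le\mathbf{1},\ \mathbf{1}^{\mathsf T}\mathbf{x}=1\}$, $\mathrm{supp}(\mathbf{x})=\{i:x_i\neq0\}$, and for a clique $C$, $\Delta(C)=\{\mathbf{x}\in\Delta:\mathrm{supp}(\mathbf{x})\subseteq C\}$. For a non-empty $C$, the characteristic vector $\mathbf{x}(C)\in\Delta$ has $x(C)_i=1/|C|$ for $i\in C$ and $0$ otherwise. For $\mathbf{x}\in\Delta$, $\mathcal{P}(\mathbf{x})$ is the set of vectors in $\Delta$ obtained by permuting the coordinates of $\mathbf{x}$. Let $\Phi:X\to\mathbb{R}$ be twice continuously differentiable on an open set $X\supset\Delta$, satisfying for every $\mathbf{x}\in\Delta$: (C1) $\nabla^2\Phi(\mathbf{x})$ is positive semidefinite; (C2) $\|\nabla^2\Phi(\mathbf{x})\|_2<2$; (C3) $\Phi$ is constant on $\mathcal{P}(\mathbf{x})$.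 Define $f(\mathbf{x})=\mathbf{x}^{\mathsf T}\mathbf{A}\mathbf{x}+\Phi(\mathbf{x})$. A point $\mathbf{x}$ of a set $Y$ is a local maximizer of $\max\{f:Y\}$ if $f(\mathbf{x})\ge f(\tilde{\mathbf{x}})$ for all $\tilde{\mathbf{x}}\in Y$ in some neighborhood of $\mathbf{x}$. *)

(* Defs.v *)
From HB Require Import structures.
From mathcomp Require Import all_boot all_order all_algebra all_fingroup.
From mathcomp Require Import all_classical all_reals all_analysis.
Set Implicit Arguments. Unset Strict Implicit. Unset Printing Implicit Defensive.
Import Order.TTheory GRing.Theory Num.Theory.
Import numFieldNormedType.Exports.
Local Open Scope classical_set_scope.
Local Open Scope ring_scope.

Section Defs.
Variables (R : realType) (n : nat).
Notation vec := 'rV[R]_n.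

Definition evec (i : 'I_n) : vec := delta_mx 0 i.

Definition partial (i : 'I_n) (g : vec -> R) (x : vec) : R := derive g x (evec i).

Definition hessian (g : vec -> R) (x : vec) : 'M[R]_n :=
  \matrix_(i, j) partial j (partial i g) x.

Definition C2_on (X : set vec) (g : vec -> R) : Prop :=
  [/\ {within X, continuous g},
      (forall x i, X x -> derivable g x (evec i)),
      (forall i, {within X, continuous (partial i g)}),
      (forall x i j, X x -> derivable (partial i g) x (evec j)) &
      (forall i j, {within X, continuous (partial j (partial i g))})].

Definition enorm (v : vec) : R := Num.sqrt (\sum_i v 0 i ^+ 2).

Definition psd (H : 'M[R]_n) : Prop := forall v : vec, 0 <= (v *m H *m v^T) 0 0.

(* spectral (operator 2-)norm of H is < a:
   ||H||_2 = sup_{v <> 0} ||H v||_2 / ||v||_2 < a *)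
Definition spec_norm_lt (H : 'M[R]_n) (a : R) : Prop :=
  exists2 c, c < a & forall v : vec, enorm (v *m H^T) <= c * enorm v.

Definition simplex : set vec :=
  [set x | (forall i, 0 <= x 0 i <= 1) /\ \sum_i x 0 i = 1].

Definition simplex_on (C : {set 'I_n}) : set vec :=
  [set x | simplex x /\ forall i, x 0 i != 0 -> i \in C].

Definition charvec (C : {set 'I_n}) : vec :=
  \row_i (if i \in C then (#|C|%:R)^-1 else 0).

Definition permvec (s : 'S_n) (x : vec) : vec := \row_i x 0 (s i).

Definition simple_graph (e : rel 'I_n) : Prop :=
  symmetric e /\ irreflexive e.

Definition adjacency (e : rel 'I_n) : 'M[R]_n := \matrix_(i, j) (e i j)%:R.

Definition is_clique (e : rel 'I_n) (C : {set 'I_n}) : Prop :=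
  forall i j, i \in C -> j \in C -> i != j -> e i j.

Definition local_maximizer (g : vec -> R) (Y : set vec) (x : vec) : Prop :=
  Y x /\ \forall y \near x, Y y -> g y <= g x.

Definition global_maximizer (g : vec -> R) (Y : set vec) (x : vec) : Prop :=
  Y x /\ forall y, Y y -> g y <= g x.
End Defs.

(* Main.v *)
Require Import Defs.
From HB Require Import structures.
From mathcomp Require Import all_boot all_order all_algebra all_fingroup.
From mathcomp Require Import all_classical all_reals all_analysis.
Set Implicit Arguments. Unset Strict Implicit. Unset Printing Implicit Defensive.
Import Order.TTheory GRing.Theory Num.Theory.
Import numFieldNormedType.Exports.
From mathcomp Require Import ring lra.
Local Open Scope classical_set_scope.
Local Open Scope ring_scope.

Lemma line_derive (R : realType) (n : nat) (g : 'rV[R]_n -> R) (p d : 'rV[R]_n) (t : R) :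
  derivable g (p + t *: d) d ->
  is_derive t 1 (fun s : R => g (p + s *: d)) ('D_d g (p + t *: d)).
Proof.
move=> dg.
have E : (fun h : R => h^-1 *: (((fun s : R => g (p + s *: d)) \o shift t) (h *: 1)
            - g (p + t *: d))) =
         (fun h : R => h^-1 *: ((g \o shift (p + t *: d)) (h *: d) - g (p + t *: d))).
  apply/funext => h /=; congr (_ *: (g _ - _)).
  by rewrite [h *: 1]mulr1 scalerDl addrCA addrC.
apply: DeriveDef; rewrite /derivable /derive E //.
Qed.
Lemma derivable_cont_within (R : realType) (f : R -> R) (A : set R) :
  (forall s, A s -> derivable f s 1) -> {within A, continuous f}.
Proof.
move=> df; apply: continuous_in_subspaceT => s /set_mem As.
exact/differentiable_continuous/derivable1_diffP/df.
Qed.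

Lemma mvt_bound (R : realType) (n : nat) (g : 'rV[R]_n -> R) (y v : 'rV[R]_n) (a c e : R) :
  (forall s, `|s| <= `|a| -> derivable g (y + s *: v) v /\ `|'D_v g (y + s *: v) - c| <= e) ->
  `|g (y + a *: v) - g y - a * c| <= `|a| * e.
Proof.
move=> H.
pose phi := (fun s : R => g (y + s *: v)) - c \*: id.
have dphi : forall s : R, `|s| <= `|a| -> is_derive s (1:R) phi ('D_v g (y + s *: v) - c *: (1:R)).
  move=> s sa; apply: is_deriveB; first exact/line_derive/(H s sa).1.
have phiE s : phi s = g (y + s *: v) - c * s by [].
have inb x b1 b2 : `|b1| <= `|a| -> `|b2| <= `|a| -> b1 <= x -> x <= b2 -> `|x| <= `|a|.
  move=> /[!ler_norml] /andP[h1 _] /andP[_ h2] h3 h4.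
  by rewrite (le_trans h1 h3) (le_trans h4 h2).
have key b1 b2 : b1 <= b2 -> `|b1| <= `|a| -> `|b2| <= `|a| ->
    `|phi b2 - phi b1| <= (b2 - b1) * e.
  move=> b12 b1a b2a.
  have [xi xiI Exi] : exists2 xi, xi \in `[b1, b2]%R & phi b2 - phi b1 = ('D_v g (y + xi *: v) - c *: (1:R)) * (b2 - b1).
    apply: MVT_segment => //.
      move=> x /[!in_itv] /= /andP[x0 xb]; apply: dphi.
      exact: (inb x b1 b2) (ltW x0) (ltW xb).
    apply: derivable_cont_within => x /= /[!in_itv] /= /andP[x0 xb].
    exact: (dphi _ (inb x b1 b2 b1a b2a x0 xb)).(ex_derive).
  move: xiI => /[!in_itv] /= /andP[xi0 xib].
  have xia : `|xi| <= `|a| by exact: (inb xi b1 b2).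
  rewrite Exi normrM [`|b2 - b1|]ger0_norm ?subr_ge0 // mulrC ler_wpM2l ?subr_ge0 //.
  by rewrite [c *: 1]mulr1; exact: (H xi xia).2.
have E : g (y + a *: v) - g y - a * c = phi a - phi 0.
  by rewrite !phiE scale0r addr0 mulr0 subr0 mulrC addrAC.
rewrite E.
have [a0|a0] := leP 0 a.
  by have := key 0 a a0; rewrite normr0 normr_ge0 subr0 (ger0_norm a0); apply.
have := key a 0 (ltW a0); rewrite normr0 normr_ge0 sub0r (ltr0_norm a0) distrC; apply => //.
Qed.

Lemma ballmx (R : realType) (n : nat) (q y : 'rV[R]_n) (r : R) :
  0 < r -> (forall i j, `|q i j - y i j| < r) -> ball q r y.
Proof. by move=> r0 H; split. Qed.

Lemma partial_line (R : realType) (n : nat) (X : set 'rV[R]_n) (g : 'rV[R]_n -> R) (q d : 'rV[R]_n) :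
  open X -> X q -> (forall x i, X x -> derivable g x (evec R i)) ->
  (forall i, {within X, continuous (partial i g)}) ->
  (fun h : R => h^-1 *: (g (h *: d + q) - g q)) @ 0^' --> \sum_i d 0 i * partial i g q.
Proof.
move=> oX Xq dg cg.
have cq i : {for q, continuous (partial i g)}.
  by have := cg i; rewrite continuous_open_subspace // => /(_ q (mem_set Xq)).
apply/cvgrPdist_le => e e0.
pose D := \sum_i `|d 0 i|.
have D0 : 0 <= D by apply: sumr_ge0.
have D1 : 0 < D + 1 by rewrite ltr_wpDl.
pose e' := e / (D + 1).
have e'0 : 0 < e' by rewrite divr_gt0.
have P : \forall y \near q, X y /\ forall i, `|partial i g y - partial i g q| <= e'.
  near=> y; split.
    by near: y; apply: open_nbhs_nbhs.
  near: y; apply: filter_forall => i.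
  have /cvgrPdist_le /(_ e' e'0) := cq i; apply: filterS => y.
  by rewrite distrC.
move: P => /nbhs_ballP [r /= r0 Hr].
have D2 : 0 < 2 * D + 1 by rewrite ltr_wpDl // mulr_ge0.
near=> h.
have h0 : h != 0 by near: h; exact: nbhs_dnbhs_neq.
have hr : `|h| * (2 * D + 1) < r.
  rewrite -ltr_pdivlMr //; near: h; apply: dnbhs0_lt; exact: divr_gt0.
pose y k := q + h *: (\row_i (if (i < k)%N then d 0 i else 0) : 'rV[R]_n).
have y0 : y 0%N = q.
  by rewrite /y (_ : \row_i _ = 0) ?scaler0 ?addr0 //; apply/rowP => i; rewrite !mxE.
have yn : y n = h *: d + q.
  rewrite /y addrC; congr (_ + _); congr (_ *: _); apply/rowP => i; rewrite !mxE.
  by rewrite ltn_ord.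
have ystep (i : 'I_n) : y i.+1 = y i + (h * d 0 i) *: evec R i.
  apply/rowP => j; rewrite /y /evec !mxE ltnS.
  case: (ltngtP j i) => [ji|ij|ji].
  - by rewrite eqxx /= (_ : (j == i) = false) ?mulr0 ?addr0 //; apply/negbTE; rewrite -val_eqE /= ltn_eqF.
  - by rewrite eqxx /= (_ : (j == i) = false) ?mulr0 ?addr0 //; apply/negbTE; rewrite -val_eqE /= gtn_eqF.
  - have -> : j = i by exact: val_inj.
    by rewrite !eqxx /= mulr0 addr0 mulr1.
have dleD (j : 'I_n) : `|d 0 j| <= D.
  by rewrite /D (bigD1 j) //= lerDl sumr_ge0.
have ball_pts (k : nat) (i : 'I_n) s : `|s| <= `|h * d 0 i| -> ball q r (y k + s *: evec R i).
  move=> hs; apply: ballmx => // i0 j; rewrite ord1 /y /evec !mxE.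
  rewrite -addrA opprD addrA subrr sub0r normrN.
  apply: le_lt_trans (ler_normD _ _) _.
  apply: le_lt_trans hr.
  have hD : `|h| * D + `|h| * D <= `|h| * (2 * D + 1).
    by rewrite mulrDr mulr1 mulrA (mulrC `|h| 2) -mulrA mulr_natl mulr2n lerDl.
  apply: le_trans hD; apply: lerD.
    rewrite normrM ler_wpM2l //; case: ifP => _; rewrite ?normr0 //.
  have d1 : `|(((0:'I_1) == 0) && (j == i))%:R : R| <= 1.
    by case: (_ && _); rewrite ?normr1 ?normr0 ?ler01.
  rewrite normrM; apply: (le_trans (ler_piMr (normr_ge0 _) d1)).
  by apply: (le_trans hs); rewrite normrM ler_wpM2l.
have step (i : 'I_n) : `|g (y i.+1) - g (y i) - h * d 0 i * partial i g q| <= `|h * d 0 i| * e'.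
  rewrite ystep; apply: mvt_bound => s hs.
  have [Xs Bs] := Hr _ (ball_pts i i s hs).
  by split; [exact: dg | exact: (Bs i)].
have tel : g (h *: d + q) - g q = \sum_(i < n) (g (y i.+1) - g (y i)).
  by rewrite -yn -{1}y0 -(telescope_sumr (fun k => g (y k)) (leq0n n)) big_mkord.
have -> : \sum_i d 0 i * partial i g q - h^-1 *: (g (h *: d + q) - g q) =
   - (h^-1 * \sum_(i < n) (g (y i.+1) - g (y i) - h * d 0 i * partial i g q)).
  rewrite tel -[h^-1 *: _]/(h^-1 * _) [in RHS]sumrB mulrBr opprB; congr (_ - _).
  rewrite mulr_sumr; apply: eq_bigr => i _; by rewrite -mulrA mulKf.
rewrite normrN normrM normfV.
have hi : 0 <= `|h|^-1 by rewrite invr_ge0.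
apply: (le_trans (ler_wpM2l hi (ler_norm_sum _ _ _))).
apply: (le_trans (ler_wpM2l hi (ler_sum _ (fun i _ => step i)))).
rewrite -mulr_suml (eq_bigr (fun i => `|h| * `|d 0 i|)); last by move=> i _; rewrite normrM.
rewrite -mulr_sumr mulrA mulKf ?normr_eq0 // -/D /e' mulrA ler_pdivrMr // mulrC ler_wpM2l ?ltW //.
by rewrite ltrDl.
Unshelve. all: by end_near.
Qed.

Lemma line_is_derive (R : realType) (n : nat) (X : set 'rV[R]_n) (g : 'rV[R]_n -> R) (p d : 'rV[R]_n) (t : R) :
  open X -> X (p + t *: d) -> (forall x i, X x -> derivable g x (evec R i)) ->
  (forall i, {within X, continuous (partial i g)}) ->
  is_derive t 1 (fun s : R => g (p + s *: d)) (\sum_i d 0 i * partial i g (p + t *: d)).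
Proof.
move=> oX Xq dg cg.
have E : (fun h : R => h^-1 *: (((fun s : R => g (p + s *: d)) \o shift t) (h *: 1)
            - g (p + t *: d))) =
         (fun h : R => h^-1 *: (g (h *: d + (p + t *: d)) - g (p + t *: d))).
  apply/funext => h /=; congr (_ *: (g _ - _)).
  by rewrite [h *: 1]mulr1 scalerDl addrCA addrC.
have cv := @partial_line R n X g (p + t *: d) d oX Xq dg cg.
apply: DeriveDef; rewrite /derivable /derive E.
  by apply/cvg_ex; eexists; exact: cv.
exact: cvg_lim cv.
Qed.

Lemma quad_form (R : realType) (n : nat) (H : 'M[R]_n) (d : 'rV[R]_n) :
  (d *m H *m d^T) 0 0 = \sum_i d 0 i * (d *m H^T) 0 i.
Proof.
rewrite !mxE; under eq_bigr do rewrite !mxE mulr_suml.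
rewrite exchange_big /=; apply: eq_bigr => i _; rewrite mxE mulr_sumr.
by apply: eq_bigr => j _; rewrite !mxE; ring.
Qed.

Lemma sqr_sum_gt0 (R : realType) (n : nat) (d : 'rV[R]_n) :
  d != 0 -> 0 < \sum_i d 0 i ^+ 2.
Proof.
move=> d0.
have [i di] : exists i, d 0 i != 0.
  apply/existsP; apply: contraR d0 => /existsPn H.
  by apply/eqP/rowP => i; rewrite mxE; move/negPn/eqP: (H i).
rewrite (bigD1 i) //= ltr_pwDl ?sumr_ge0 // => [|j _]; last exact: sqr_ge0.
by rewrite lt_def sqrf_eq0 di sqr_ge0.
Qed.

Lemma quad_lt (R : realType) (n : nat) (H : 'M[R]_n) (d : 'rV[R]_n) :
  d != 0 -> spec_norm_lt H 2 -> (d *m H *m d^T) 0 0 < 2 * \sum_i d 0 i ^+ 2.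
Proof.
move=> d0 [c c2 Hc].
set w := d *m H^T.
have A0 := sqr_sum_gt0 d0.
set A := \sum_i d 0 i ^+ 2 in A0 *.
set B := \sum_i w 0 i ^+ 2.
have B0 : 0 <= B by apply: sumr_ge0 => i _; exact: sqr_ge0.
have := Hc d; rewrite /enorm -/w -/A -/B => hc.
have sA : 0 < Num.sqrt A by rewrite sqrtr_gt0.
have c0 : 0 <= c.
  by rewrite -(pmulr_lge0 _ sA); apply: le_trans hc; exact: sqrtr_ge0.
have BA : B <= c ^+ 2 * A.
  move: hc; rewrite -ler_sqr ?nnegrE ?mulr_ge0 ?sqrtr_ge0 //.
  by rewrite exprMn !sqr_sqrtr // ltW.
have cc : c ^+ 2 < 4.
  have : c * c < 2 * 2 by apply: ltr_pM => //.
  by rewrite expr2; lra.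
have BA4 : B < 4 * A.
  by apply: le_lt_trans BA _; rewrite ltr_pM2r.
rewrite quad_form.
have : \sum_i d 0 i * w 0 i <= \sum_i (d 0 i ^+ 2 + w 0 i ^+ 2 / 4).
  apply: ler_sum => i _; have := sqr_ge0 (d 0 i - w 0 i / 2); lra.
rewrite big_split /= -mulr_suml -/A -/B.
lra.
Qed.

Definition Fq (R : realType) (n : nat) (Phi : 'rV[R]_n -> R) (x : 'rV[R]_n) : R :=
  Phi x - \sum_i x 0 i ^+ 2.

Lemma dquad (R : realType) (a0 a1 a2 t : R) :
  is_derive t 1 (fun s : R => a0 + a1 * s + a2 * s ^+ 2) (a1 + 2 * a2 * t).
Proof.
have -> : (fun s : R => a0 + a1 * s + a2 * s ^+ 2) = cst a0 + a1 \*: id + a2 \*: ((@id R) ^+ 2).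
  by apply/funext => s /=.
apply: is_derive_eq.
by rewrite /= add0r /GRing.scale /= !mulr1 expr1 mulrA (mulrC a2).
Qed.

Lemma strict_decrease (R : realType) (n : nat) (X : set 'rV[R]_n) (Phi : 'rV[R]_n -> R)
  (z d : 'rV[R]_n) :
  open X -> C2_on X Phi -> d != 0 ->
  (forall t, 0 <= t <= 1 -> X (z + t *: d) /\ spec_norm_lt (hessian Phi (z + t *: d)) 2) ->
  (exists2 del, 0 < del & forall s, 0 < s < del -> Fq Phi (z + s *: d) <= Fq Phi z) ->
  Fq Phi (z + d) < Fq Phi z.
Proof.
move=> oX [_ dP cP ddP cdP] d0 Hpts [del del0 Hdel].
pose a0 := \sum_i z 0 i ^+ 2.
pose a1 := \sum_i z 0 i * d 0 i.
pose a2 := \sum_i d 0 i ^+ 2.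
pose h t := Fq Phi (z + t *: d).
pose hp t := \sum_i d 0 i * partial i Phi (z + t *: d) - (2 * a1 + 2 * a2 * t).
pose hpp t := (d *m hessian Phi (z + t *: d) *m d^T) 0 0 - 2 * a2.
have sqE t : \sum_i (z + t *: d) 0 i ^+ 2 = a0 + 2 * a1 * t + a2 * t ^+ 2.
  rewrite /a0 /a1 /a2 mulr_sumr !mulr_suml -!big_split /=.
  by apply: eq_bigr => i _; rewrite !mxE; ring.
have dh (t : R) : 0 <= t <= 1 -> is_derive t (1:R) h (hp t).
  move=> t01.
  have -> : h = (fun s => Phi (z + s *: d)) - (fun s => a0 + 2 * a1 * s + a2 * s ^+ 2).
    by apply/funext => s; rewrite /h /Fq sqE.
  have q := dquad a0 (2 * a1) a2 t.
  have p := line_is_derive oX (Hpts t t01).1 dP cP.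
  exact: is_deriveB p q.
have dhp (t : R) : 0 <= t <= 1 -> is_derive t (1:R) hp (hpp t).
  move=> t01.
  have -> : hp = \sum_i (d 0 i \*: (fun s => partial i Phi (z + s *: d))) -
                 (fun s => 2 * a1 + 2 * a2 * s + 0 * s ^+ 2).
    apply/funext => s; rewrite /hp fct_sumE /=; congr (_ - _).
    by rewrite mul0r addr0.
  have q := dquad (2 * a1) (2 * a2) 0 t.
  have p : forall i, is_derive t 1 (d 0 i \*: (fun s => partial i Phi (z + s *: d)))
      (d 0 i *: \sum_j d 0 j * partial j (partial i Phi) (z + t *: d)).
    move=> i; apply: is_deriveZ.
    exact: line_is_derive oX (Hpts t t01).1 (ddP ^~ i) (cdP i).
  apply: is_derive_eq.
  rewrite /hpp mulr0 mul0r addr0; congr (_ - _).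
  rewrite !mxE; under [RHS]eq_bigr do rewrite !mxE mulr_suml.
  rewrite exchange_big /=; apply: eq_bigr => i _; rewrite /GRing.scale /= mulr_sumr.
  by apply: eq_bigr => j _; rewrite !mxE; ring.
have hpp0 t : 0 <= t <= 1 -> hpp t < 0.
  move=> t01; rewrite /hpp subr_lt0; exact: quad_lt d0 (Hpts t t01).2.
have itv01 (x a b : R) : x \in `]a, b[ -> 0 <= a -> b <= 1 -> 0 <= x <= 1.
  move=> /[!in_itv] /= /andP[ax xb] ha hb.
  by rewrite (le_trans ha (ltW ax)) (le_trans (ltW xb) hb).
have itv01c (x a b : R) : x \in `[a, b] -> 0 <= a -> b <= 1 -> 0 <= x <= 1.
  move=> /[!in_itv] /= /andP[ax xb] ha hb.
  by rewrite (le_trans ha ax) (le_trans xb hb).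
have cont_h (a b : R) : 0 <= a -> b <= 1 -> {within `[a, b], continuous h}.
  move=> ha hb; apply: derivable_cont_within => x /= xab.
  by case: (dh x (itv01c x a b xab ha hb)).
have cont_hp (a b : R) : 0 <= a -> b <= 1 -> {within `[a, b], continuous hp}.
  move=> ha hb; apply: derivable_cont_within => x /= xab.
  by case: (dhp x (itv01c x a b xab ha hb)).
have h1 : h 1 = Fq Phi (z + d) by rewrite /h scale1r.
have h0 : h 0 = Fq Phi z by rewrite /h scale0r addr0.
rewrite -h1 -h0 ltNge; apply/negP => H10.
have [c c01 Ec] := MVT ltr01 (fun x hx => dh x (itv01 x 0 1 hx (lexx _) (lexx _))) (cont_h 0 1 (lexx _) (lexx _)).
have hpc : 0 <= hp c by move: Ec; rewrite subr0 mulr1 => <-; rewrite subr_ge0.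
move: c01 => /[!in_itv] /= /andP[c0 c1].
have hp_dec : {in `[0, 1] &, {homo hp : x y /~ x < y}}.
  apply: ltr0_derive1_lt_cc (cont_hp 0 1 (lexx _) (lexx _)).
    by move=> x hx; case: (dhp x (itv01 x 0 1 hx (lexx _) (lexx _))).
  move=> x hx; have x01 := itv01 x 0 1 hx (lexx _) (lexx _).
  by rewrite derive1E; case: (dhp x x01) => _ ->; exact: hpp0.
have hp_pos x : x \in `]0, c[ -> 0 < hp x.
  move=> /[!in_itv] /= /andP[x0 xc]; apply: le_lt_trans hpc _.
  by apply: hp_dec => //; rewrite in_itv /= ?(ltW x0) ?(ltW c0) ?(ltW c1) ?(ltW (lt_trans xc c1)).
have h_inc : {in `[0, c] &, {homo h : x y / x < y}}.
  apply: gtr0_derive1_lt_cc (cont_h 0 c (lexx _) (ltW c1)).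
    by move=> x hx; case: (dh x (itv01 x 0 c hx (lexx _) (ltW c1))).
  move=> x hx; have x01 := itv01 x 0 c hx (lexx _) (ltW c1).
  by rewrite derive1E; case: (dh x x01) => _ ->; exact: hp_pos.
pose s := Num.min (del / 2) c.
have s0 : 0 < s by rewrite lt_min divr_gt0 ?c0.
have sdel : s < del by rewrite gt_min ltr_pdivrMr // ltr_pMr // ltr1n.
have sc : s <= c by rewrite ge_min lexx orbT.
have : h 0 < h s by apply: h_inc => //; rewrite in_itv /= ?lexx ?(ltW c0) ?(ltW s0).
rewrite ltNge h0 /h; apply/negP/negPn; apply: Hdel.
by rewrite s0 sdel.
Qed.

Lemma fE (R : realType) (n : nat) (e : rel 'I_n) (C : {set 'I_n}) (x : 'rV[R]_n) :
  simple_graph e -> is_clique e C -> simplex_on C x ->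
  (x *m adjacency R e *m x^T) 0 0 = 1 - \sum_i x 0 i ^+ 2.
Proof.
move=> [_ irr] cl [[_ s1] supp].
have term i j : x 0 i * adjacency R e i j * x 0 j =
    x 0 i * x 0 j - (if i == j then x 0 i * x 0 j else 0).
  have [xi0|xi0] := eqVneq (x 0 i) 0; first by rewrite xi0 !mul0r; case: ifP; rewrite subrr.
  have [xj0|xj0] := eqVneq (x 0 j) 0; first by rewrite xj0 !mulr0; case: ifP; rewrite subrr.
  rewrite mxE; have [->|ij] := eqVneq i j.
    by rewrite irr mulr0 mul0r subrr.
  by rewrite (cl i j (supp _ xi0) (supp _ xj0) ij) mulr1 subr0.
rewrite mxE.
under eq_bigr do rewrite mxE mulr_suml.
under eq_bigr do under eq_bigr do rewrite [x^T _ _]mxE term.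
rewrite exchange_big /=.
under eq_bigr do rewrite sumrB.
rewrite sumrB; congr (_ - _).
  by rewrite -big_distrlr /= s1 mulr1.
apply: eq_bigr => i _; rewrite -big_mkcond /= (big_pred1 i) ?expr2 // => j /=; rewrite eq_sym.
Qed.

Lemma simplex_on_convex (R : realType) (n : nat) (C : {set 'I_n}) (z w : 'rV[R]_n) (t : R) :
  simplex_on C z -> simplex_on C w -> 0 <= t <= 1 -> simplex_on C (z + t *: (w - z)).
Proof.
move=> [[zb zs] zC] [[wb ws] wC] /andP[t0 t1].
have E i : (z + t *: (w - z)) 0 i = (1 - t) * z 0 i + t * w 0 i.
  by rewrite !mxE; ring.
split; [split|].
- move=> i; rewrite E; have /andP[z0 z1] := zb i; have /andP[w0 w1] := wb i.
  apply/andP; split; first by rewrite addr_ge0 // mulr_ge0 // subr_ge0.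
  have : (1 - t) * z 0 i + t * w 0 i <= (1 - t) * 1 + t * 1.
    by apply: lerD; apply: ler_wpM2l; rewrite ?subr_ge0.
  by rewrite !mulr1 subrK.
- under eq_bigr do rewrite E.
  by rewrite big_split /= -!mulr_sumr zs ws !mulr1 subrK.
- move=> i; rewrite E => /eqP H.
  have [zi|zi] := eqVneq (z 0 i) 0; last exact: zC.
  have [wi|wi] := eqVneq (w 0 i) 0; last exact: wC.
  by exfalso; apply: H; rewrite zi wi !mulr0 addr0.
Qed.

Lemma sum_continuous (R : realType) (n : nat) (G : 'I_n -> 'rV[R]_n -> R) :
  (forall i, continuous (G i)) -> continuous (fun x => \sum_i G i x).
Proof.
move=> cG x.
have -> : (fun x => \sum_i G i x) = \sum_i G i by rewrite fct_sumE.
elim/big_ind: _ => //; first exact: cst_continuous.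
by move=> f g cf cg; apply: continuousD.
Qed.

Lemma sq_sum_continuous (R : realType) (n : nat) :
  continuous (fun x : 'rV[R]_n => \sum_i x 0 i ^+ 2).
Proof.
apply: sum_continuous => i x.
have -> : (fun x : 'rV[R]_n => x 0 i ^+ 2) = (fun x => x 0 i) \* (fun x => x 0 i).
  by apply/funext => y /=; rewrite expr2.
by apply: continuousM; apply: coord_continuous.
Qed.

Lemma simplex_on_closed (R : realType) (n : nat) (C : {set 'I_n}) :
  closed (simplex_on (R:=R) C).
Proof.
have -> : simplex_on (R:=R) C =
   (\bigcap_i ((fun x : 'rV[R]_n => x 0 i) @^-1` `[0, 1]%classic)) `&`
   ((fun x : 'rV[R]_n => \sum_i x 0 i) @^-1` [set 1]) `&`
   (\bigcap_(i in [set i | i \notin C]) ((fun x : 'rV[R]_n => x 0 i) @^-1` [set 0])).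
  apply/seteqP; split => x /=.
    move=> [[xb xs] xC]; split; [split|] => //.
      by move=> i _ /=; rewrite in_itv /=; exact: xb.
    move=> i /= iC; apply/eqP; apply: contraNT iC; exact: xC.
  move=> [[xb xs] xC]; split; [split|] => //.
    by move=> i; have := xb i I; rewrite /= in_itv.
  by move=> i xi; apply: contraNT xi => iC; apply/eqP; exact: xC.
apply: closedI; first apply: closedI.
- apply: closed_bigI => i _; apply: preimage_closed; last exact: itv_closed.
  by move=> x _; apply: coord_continuous.
- apply: preimage_closed; last exact: closed_eq.
  by move=> x _; apply: sum_continuous => i; apply: coord_continuous.
- apply: closed_bigI => i _; apply: preimage_closed; last exact: closed_eq.
  by move=> x _; apply: coord_continuous.
Qed.

Lemma simplex_on_compact (R : realType) (n : nat) (C : {set 'I_n}) :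
  compact (simplex_on (R:=R) C).
Proof.
have K := @rV_compact R n (fun=> `[(0:R), 1]%classic) (fun=> @segment_compact R 0 1).
apply: (subclosed_compact (@simplex_on_closed R n C) K).
by move=> x [[xb _] _] i /=; rewrite in_itv /=; exact: xb.
Qed.

Lemma charvec_in (R : realType) (n : nat) (C : {set 'I_n}) :
  (0 < #|C|)%N -> simplex_on C (charvec R C).
Proof.
move=> C0.
have N0 : 0 < #|C|%:R :> R by rewrite ltr0n.
split; [split|].
- move=> i; rewrite mxE; case: ifP => _; last by rewrite lexx ler01.
  rewrite invr_ge0 ltW //= invf_le1 //.
  by rewrite ler1n.
- under eq_bigr do rewrite mxE.
  rewrite -big_mkcond /= sumr_const -[_ *+ _]mulr_natr; apply: mulVf.
  exact: lt0r_neq0.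
- by move=> i; rewrite mxE; case: ifP => // _; rewrite eqxx.
Qed.

Unset Implicit Arguments.
Theorem proposition1 (R : realType) (n : nat) (e : rel 'I_n)
  (X : set 'rV[R]_n) (Phi : 'rV[R]_n -> R) (C : {set 'I_n}) :
  simple_graph e ->
  open X -> simplex (n:=n) `<=` X ->
  C2_on X Phi ->
  (forall x, simplex x -> psd (hessian Phi x)) ->
  (forall x, simplex x -> spec_norm_lt (hessian Phi x) 2) ->
  (forall x, simplex x -> forall s : 'S_n, Phi (permvec s x) = Phi x) ->
  is_clique e C -> (0 < #|C|)%N ->
  let f := fun x : 'rV[R]_n => (x *m adjacency R e *m x^T) 0 0 + Phi x in
  [/\ local_maximizer f (simplex_on C) (charvec R C),
      (forall y, local_maximizer f (simplex_on C) y -> y = charvec R C),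
      global_maximizer f (simplex_on C) (charvec R C) &
      (forall y, global_maximizer f (simplex_on C) y -> y = charvec R C)].
Proof.
move=> sg oX sX C2 _ hspec hperm cl C0 f.
have sub_simplex : simplex_on (R:=R) C `<=` simplex (n:=n) by move=> x [h _].
have fF x : simplex_on C x -> f x = 1 + Fq Phi x.
  by move=> hx; rewrite /f (fE sg cl hx) /Fq addrAC addrA.
have strict z : local_maximizer f (simplex_on C) z ->
    forall w, simplex_on C w -> w != z -> Fq Phi w < Fq Phi z.
  move=> [Cz Hz] w Cw wz.
  have := @strict_decrease R n X Phi z (w - z) oX C2.
  have E : z + (w - z) = w by rewrite addrC subrK.
  rewrite E; apply.
  - by rewrite subr_eq0.
  - move=> t t01; have Ct := simplex_on_convex Cz Cw t01.
    by split; [apply: sX; exact: (sub_simplex _ Ct) | apply: hspec; exact: sub_simplex].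
  have cv : ((cst z) + (fun s : R => s *: (w - z))) @ (0:R) --> z + 0 *: (w - z).
    apply: cvgD; first exact: cvg_cst.
    exact: scalel_continuous.
  rewrite scale0r addr0 in cv.
  have := cv _ Hz => /nbhs_ballP [r /= r0 Hr].
  exists (Num.min r 1); first by rewrite lt_min r0 ltr01.
  move=> s /andP[s0]; rewrite lt_min => /andP[sr s1].
  have s01 : 0 <= s <= 1 by rewrite ltW // ltW.
  have Cs := simplex_on_convex Cz Cw s01.
  have : ball (0:R) r s by rewrite /ball /= sub0r normrN gtr0_norm.
  move=> /Hr /(_ Cs); rewrite !fF //; by rewrite lerD2l.
have local_eq z : local_maximizer f (simplex_on C) z -> z = charvec R C.
  move=> hz; have [Cz _] := hz.
  have [[zb zs] zC] := Cz.
  have sym i j : i \in C -> j \in C -> z 0 i = z 0 j.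
    move=> iC jC; pose s := tperm i j; pose w := permvec s z.
    have sC x : x \in C -> s x \in C by rewrite /s; case: tpermP => // -> ->.
    have Cw : simplex_on C w.
      split; [split|].
      - by move=> k; rewrite mxE; exact: zb.
      - rewrite -zs [RHS](reindex_inj (@perm_inj _ s)).
        by apply: eq_bigr => k _; rewrite mxE.
      - move=> k; rewrite mxE => /zC skC; rewrite -(tpermK i j k); exact: sC.
    have Fw : Fq Phi w = Fq Phi z.
      rewrite /Fq /w hperm; last exact: sub_simplex.
      congr (_ - _); rewrite [RHS](reindex_inj (@perm_inj _ s)).
      by apply: eq_bigr => k _; rewrite mxE.
    have wz : w = z.
      apply/eqP; apply: contraT => wz.
      by have := strict z hz w Cw wz; rewrite Fw ltxx.
    by have := congr1 (fun v : 'rV[R]_n => v 0 i) wz; rewrite /= mxE tpermL => <-.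
  have [i0 i0C] : exists i0, i0 \in C by move: C0; rewrite card_gt0 => /set0Pn.
  have out k : k \notin C -> z 0 k = 0.
    by move=> kC; apply/eqP; apply: contraNT kC; exact: zC.
  have N0 : #|C|%:R != 0 :> R by rewrite pnatr_eq0 -lt0n.
  have s1 : \sum_(k in C) z 0 k = 1.
    rewrite -zs (bigID (fun k => k \in C) predT) /= [X in _ = _ + X]big1 ?addr0 // => k kC.
  have s2 : \sum_(k in C) z 0 k = #|C|%:R * z 0 i0.
    rewrite (eq_bigr (fun=> z 0 i0)) ?sumr_const ?mulr_natl // => k kC; exact: sym.
  have val : z 0 i0 = #|C|%:R^-1.
    by apply: (mulfI N0); rewrite -s2 s1 mulfV.
  apply/rowP => k; rewrite mxE; case: ifP => kC.
    by rewrite (sym k i0 kC i0C) val.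
  by rewrite out ?kC.
have [c Cc cmax] : exists2 c, c \in simplex_on C &
    forall t, t \in simplex_on C -> Fq Phi t <= Fq Phi c.
  apply: EVT_max_rV.
  - by exists (charvec R C); exact: charvec_in.
  - exact: simplex_on_compact.
  apply: continuous_in_subspaceT => x /set_mem Cx.
  have [cPhi _ _ _ _] := C2.
  rewrite continuous_open_subspace // in cPhi.
  have := continuousB (cPhi x (mem_set (sX _ (sub_simplex _ Cx)))) (@sq_sum_continuous R n x).
  by [].
have cglob : global_maximizer f (simplex_on C) c.
  split; first exact: set_mem Cc.
  by move=> y Cy; rewrite !fF ?lerD2l ?cmax ?inE //; exact: set_mem.
have cloc : local_maximizer f (simplex_on C) c.
  split; first exact: cglob.1.
  near=> y; exact: cglob.2.
have cE := local_eq c cloc.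
split.
- by rewrite -cE.
- exact: local_eq.
- by rewrite -cE.
- move=> y [Cy Hy]; apply: local_eq; split => //; near=> x; exact: Hy.
Unshelve. all: by end_near.
Qed.
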